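(* Let $r,n$ be positive integers, let $\pi_0\in G_{r,n}$, let $M=(t_i^j)$ be its associated $\{a,b\}$-matrix and $w=w_{\pi_0}$ the associated excedance word. Write $\Psi(w)=(a^{n_1}x_1a^{n_2}x_2\cdots x_ka^{n_{k+1}})$ with $x_i\in\{b,a+b\}$, $n_i\ge 0$, where $k$ is the number of letters of $\Psi(w)$ different from $a$. Let $I(w)=\{i\in\{1,\dots,k\}: x_i=a+b\}$, $$R_k=\{\mathbf r=(r_1,\dots,r_{k+1})\in\mathbb{Z}^{k+1} : r_1=1,\ r_{i+1}-r_i\in\{0,1\}\text{ for all }i,\ r_{i+1}-r_i=1\text{ if } i\in I(w)\},$$ $h(\mathbf r)=|\{i\in\{1,\dots,k\}: r_i=r_{i+1}\}|$, and $\mathbf r^{\mathbf n(w)+\mathbf 1}=\prod_{i=1}^{k+1}r_i^{\,n_i+1}$. Then $$[w]=[\Psi(w)]=\sum_{\mathbf r\in R_k}(-1)^{h(\mathbf r)}\,\mathbf r^{\mathbf n(w)+\mathbf 1}.$$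
   Context: Let $\Sigma=\{i^{[j]} : i\in\{1,\dots,n\},\ j\in\{0,\dots,r-1\}\}$ (color indices modulo $r$). The group $G_{r,n}$ is realized as the set of bijections $\pi:\Sigma\to\Sigma$ such that $\pi(i^{[\alpha]})=j^{[\beta]}$ implies $\pi(i^{[\alpha+1]})=j^{[\beta+1]}$. Color order on $\Sigma$: $i^{[\alpha]}<j^{[\beta]}$ iff $\alpha>\beta$, or $\alpha=\beta$ and $i<j$. For $\pi\in G_{r,n}$ the matrix $M(\pi)=(t_i^j)$, $1\le i\le n$, $j=r-1,\dots,0$, has $t_i^j=b$ if $\pi(i^{[j]})>i^{[j]}$ and $t_i^j=a$ otherwise. The excedance word $w_\pi\in\{a,b\}^{rn-1}$ is the concatenation, for $j=r-1,\dots,0$, of $t_1^j\cdots t_n^j$, with the final letter $t_n^0$ deleted; for $w\in\{a,b\}^{rn-1}$, $[w]=\#\{\pi\in G_{r,n}: w_\pi=w\}$. The map $\Psi$ sends $M=(t_i^j)$ (equivalently its word $w$) to the word $\Psi(w)=(w'_1\cdots w'_{n-1})\in\{a,b,a+b\}^{n-1}$ with $w'_i=a$ if $t_i^j=a$ for all $j$, $w'_i=b$ if $t_i^j=b$ for all $j$, and $w'_i=a+b$ otherwise. For $\sigma\in S_n$ its excedance word is $w_\sigma=u_1\cdots u_{n-1}$ with $u_i=b$ if $\sigma(i)>i$ and $u_i=a$ otherwise; for $w'\in\{a,b,a+b\}^{n-1}$, $[w']$ is the number of $\sigma\in S_n$ such that for every $i$ with $w'_i\in\{a,b\}$ one has $u_i=w'_i$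 (a letter $a+b$ imposes no condition). *)

(* Defs.v *)
From HB Require Import structures.
From mathcomp Require Import all_boot all_order all_algebra all_fingroup.
Set Implicit Arguments. Unset Strict Implicit. Unset Printing Implicit Defensive.
Import Order.TTheory GRing.Theory Num.Theory.

(* Colored letters i^[j] are pairs (i, j) : 'I_n * 'I_r, with 0-based
   letter index i (paper's i = val i + 1) and color j in 'I_r. *)
Definition sigma_t (r n : nat) := ('I_n * 'I_r)%type.

Definition inG (r n : nat) (pi : {perm sigma_t r n}) : bool :=
  [forall x : sigma_t r n,
     pi (x.1, ordS x.2) == ((pi x).1, ordS (pi x).2)].

Definition col_lt (r n : nat) (x y : sigma_t r n) : bool :=
  (y.2 < x.2)%N || ((x.2 == y.2) && (x.1 < y.1)%N).

(* t_i^j = b (true) iff pi(i^[j]) > i^[j]; false encodes letter a *)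
Definition tmat (r n : nat) (pi : {perm sigma_t r n}) (i : 'I_n) (j : 'I_r)
  : bool := col_lt (i, j) (pi (i, j)).

Definition exc_word (r n : nat) (pi : {perm sigma_t r n}) : seq bool :=
  take (r * n).-1
    (flatten [seq [seq tmat pi i j | i <- enum 'I_n] | j <- rev (enum 'I_r)]).

Definition cnt_G (r n : nat) (w : seq bool) : nat :=
  #|[set pi : {perm sigma_t r n} | inG pi && (exc_word pi == w)]|.

Definition letter := option bool.
Definition La : letter := Some false.
Definition Lb : letter := Some true.
Definition Lab : letter := None.

Definition letter_of (s : seq bool) : letter :=
  if all (fun t => ~~ t) s then La
  else if all id s then Lb else Lab.

(* Psi(w): w'_i for i = 1..n-1 (0-based i here), using t_i^j, which sits at
   position (r-1-j)*n + (i-1) of the word w. *)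
Definition Psi (r n : nat) (w : seq bool) : seq letter :=
  [seq letter_of [seq nth false w ((r - 1 - j) * n + i) | j <- iota 0 r]
  | i <- iota 0 n.-1].

Definition cnt_S (n : nat) (w' : seq letter) : nat :=
  #|[set s : 'S_n | [forall i : 'I_n, (i < n.-1)%N ==>
        match nth Lab w' i with
        | Some c => ((i < s i)%N == c)
        | None => true
        end]]|.

Fixpoint assemble (ns : seq nat) (xs : seq letter) : seq letter :=
  match ns, xs with
  | m :: ns', x :: xs' => nseq m La ++ x :: assemble ns' xs'
  | m :: _, [::] => nseq m La
  | [::], _ => [::]
  end.

(* Every r in R_k has 1 <= r_i <= k+1, so R_k is enumerated as the functions
   rr : 'I_(k+1) -> 'I_(k+2) satisfying the defining conditions
   (rr at 0-based position i is r_{i+1}). *)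
Definition rr_at (k : nat) (rr : {ffun 'I_k.+1 -> 'I_k.+2}) (i : nat) : nat :=
  rr (inord i).

Definition in_Rk (k : nat) (xs : seq letter) (rr : {ffun 'I_k.+1 -> 'I_k.+2})
  : bool :=
  (rr_at rr 0 == 1%N) &&
  [forall i : 'I_k,
     ((rr_at rr i.+1 == rr_at rr i) || (rr_at rr i.+1 == (rr_at rr i).+1)) &&
     ((nth La xs i == Lab) ==> (rr_at rr i.+1 == (rr_at rr i).+1))].

Definition h_of (k : nat) (rr : {ffun 'I_k.+1 -> 'I_k.+2}) : nat :=
  #|[set i : 'I_k | rr_at rr i.+1 == rr_at rr i]|.

Definition rhs_sum (ns : seq nat) (xs : seq letter) : int :=
  let k := size xs in
  \sum_(rr : {ffun 'I_k.+1 -> 'I_k.+2} | in_Rk xs rr)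
     ((-1) ^+ h_of rr *
      \prod_(i < k.+1) ((rr_at rr i)%:Z ^+ (nth 0%N ns i).+1))%R.

(* Main.v *)
Require Import Defs.
From HB Require Import structures.
From mathcomp Require Import all_boot all_order all_algebra all_fingroup.
From mathcomp Require Import zify.
Import Order.TTheory GRing.Theory Num.Theory.

Module Aux.
Set Implicit Arguments. Unset Strict Implicit. Unset Printing Implicit Defensive.

Lemma pos_lt R n i j : (i < n)%N -> (0 < j)%N -> (j < R)%N ->
  ((R - 1 - j) * n + i < (R * n).-1)%N.
Proof. move=> *; nia. Qed.
Lemma pos_lt0 R n i : (i < n.-1)%N -> (0 < R)%N -> ((R - 1 - 0) * n + i < (R * n).-1)%N.
Proof. move=> *; nia. Qed.

Lemma modS_mod a d : (a %% d).+1 %% d = a.+1 %% d.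
Proof. by rewrite -addn1 modnDml addn1. Qed.

Lemma nth_flat (I T : Type) (x0 : T) (y0 : I) (g : I -> seq T) (s : seq I) k q i :
  (forall x, size (g x) = k) -> (i < k)%N -> (q < size s)%N ->
  nth x0 (flatten (map g s)) (q * k + i) = nth x0 (g (nth y0 s q)) i.
Proof.
move=> Hg Hi; elim: s q => [|x s IH] [|q] //= Hq.
  by rewrite nth_cat Hg Hi.
rewrite nth_cat Hg ltnNge mulSn -addnA leq_addr /= -IH //.
by congr nth; lia.
Qed.

Section P1.
Variables (r n : nat).
Local Notation R := r.+1.

Definition mkf (s : 'S_n) (c : 'I_n -> 'I_R) (x : sigma_t R n) : sigma_t R n :=
  (s x.1, Ordinal (ltn_pmod (c x.1 + x.2) (ltn0Sn r))).

Lemma mkf_inj s c : injective (mkf s c).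
Proof.
move=> [i j] [i' j'] [/perm_inj Ei /eqP E]; subst i'; congr pair; apply: val_inj => /=.
move: E; rewrite /= eqn_modDl !modn_small //; exact: eqP.
Qed.

Definition mk s c : {perm sigma_t R n} := perm (@mkf_inj s c).

Lemma mkE s c i j : mk s c (i, j) = (s i, Ordinal (ltn_pmod (c i + j) (ltn0Sn r))).
Proof. by rewrite permE. Qed.

Lemma inG_mk s c : inG (mk s c).
Proof.
apply/forallP => -[i j]; rewrite !mkE /=; apply/eqP; congr pair; apply: val_inj => /=.
by rewrite modnDmr modS_mod addnS.
Qed.

Lemma iter_ordS_val m (x : 'I_R) : nat_of_ord (iter m (@ordS R) x) = (x + m) %% R.
Proof.
elim: m => [|m IH] /=; first by rewrite addn0 modn_small.
by rewrite IH modS_mod addnS.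
Qed.

Lemma G_char pi : inG pi -> exists s c, pi = mk s c.
Proof.
move=> /forallP HG.
pose sf i := (pi (i, ord0)).1; pose c i := (pi (i, ord0)).2.
have key : forall i m, pi (i, iter m (@ordS R) ord0) = (sf i, iter m (@ordS R) (c i)).
  move=> i; elim => [|m IH] /=; first by rewrite /sf /c; case: (pi _).
  by rewrite (eqP (HG (i, iter m (@ordS R) ord0))) /= IH.
have form : forall i (j : 'I_R), pi (i, j) = (sf i, Ordinal (ltn_pmod (c i + j) (ltn0Sn r))).
  move=> i j; have Ej : iter j (@ordS R) ord0 = j.
    by apply: ord_inj; rewrite iter_ordS_val add0n modn_small.
  rewrite -{1}Ej key; congr pair; apply: ord_inj; by rewrite iter_ordS_val.
have sf_inj : injective sf.
  move=> i i' E.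
  have Hj : (c i' + R - c i) %% R < R by rewrite ltn_pmod.
  have := form i (Ordinal Hj); rewrite E.
  have -> : Ordinal (ltn_pmod (c i + Ordinal Hj) (ltn0Sn r)) = c i'.
    apply: val_inj => /=; rewrite modnDmr.
    have -> : c i + (c i' + R - c i) = c i' + R by have := ltn_ord (c i); lia.
    by rewrite modnDr modn_small.
  have <- : pi (i', ord0) = (sf i', c i') by rewrite /sf /c; case: (pi _).
  by move/perm_inj => [].
exists (perm sf_inj), c; apply/permP => -[i j].
rewrite form mkE permE; congr pair; exact: val_inj.
Qed.

Lemma tmat_mk s c i j : tmat (mk s c) i j =
  if nat_of_ord (c i) == 0 then (i < s i)%N else (R <= c i + j)%N.
Proof.
rewrite /tmat /col_lt mkE /= -val_eqE /=.
have Hc := ltn_ord (c i); have Hj := ltn_ord j.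
case: (ltnP (c i + j) R) => H.
  rewrite modn_small //.
  case: (eqVneq (nat_of_ord (c i)) 0) => Hc0.
    by rewrite Hc0 add0n ltnn eqxx.
  have -> : (nat_of_ord j == c i + j) = false by apply/negbTE; lia.
  by rewrite andFb orbF; apply/negbTE; rewrite -leqNgt; lia.
have Hc0 : (nat_of_ord (c i) == 0) = false by apply/negbTE; lia.
have -> : (c i + j) %% R = c i + j - R.
  by rewrite -{1}(subnK H) modnDr modn_small //; lia.
by rewrite Hc0; apply/orP; left; lia.
Qed.

Lemma exc_nth pi (i : 'I_n) (j : 'I_R) : ((R - 1 - j) * n + i < (R * n).-1)%N ->
  nth false (exc_word pi) ((R - 1 - j) * n + i) = tmat pi i j.
Proof.
move=> Hp; rewrite /exc_word nth_take //.
rewrite (@nth_flat _ _ false ord0 _ _ n) ?size_rev ?size_enum_ord //; last 2 first.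
- by move=> x; rewrite size_map size_enum_ord.
- have := ltn_ord j; lia.
rewrite nth_rev ?size_enum_ord; last by have := ltn_ord j; lia.
have -> : R - (R - 1 - j).+1 = nat_of_ord j by have := ltn_ord j; lia.
rewrite nth_ord_enum (nth_map i) ?size_enum_ord //.
by rewrite nth_ord_enum.
Qed.

Definition tmat_agree (p1 p2 : {perm sigma_t R n}) :=
  forall (i : 'I_n) (j : 'I_R), ((R - 1 - j) * n + i < (R * n).-1)%N ->
    tmat p1 i j = tmat p2 i j.

Lemma agree_sym p1 p2 : tmat_agree p1 p2 -> tmat_agree p2 p1.
Proof. by move=> E i j H; rewrite E. Qed.

Lemma L1 s c s0 c0 i : tmat_agree (mk s c) (mk s0 c0) ->
  nat_of_ord (c i) = 0 -> nat_of_ord (c0 i) = 0.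
Proof.
move=> E Hc; apply/eqP; apply/negP => /negP Hb.
have Hr : (0 < r)%N by have := ltn_ord (c0 i); lia.
have := E i ord_max (pos_lt (ltn_ord i) Hr (ltnSn r)).
rewrite !tmat_mk Hc eqxx (negbTE Hb) /= => Hlt.
have Hlt' : (i < s i)%N by rewrite Hlt; lia.
have Hi : (i < n.-1)%N by have := ltn_ord (s i); lia.
have := E i ord0 (pos_lt0 Hi (ltn0Sn r)).
rewrite !tmat_mk Hc eqxx (negbTE Hb) /= Hlt' => /esym.
rewrite addn0 => /idP; rewrite leqNgt ltn_ord //.
Qed.

Lemma L2 s c s0 c0 i : tmat_agree (mk s c) (mk s0 c0) ->
  nat_of_ord (c i) != 0 -> nat_of_ord (c0 i) != 0 -> (c i <= c0 i)%N.
Proof.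
move=> E Ha Hb.
have Hj : (R - c i < R)%N by have := ltn_ord (c i); lia.
have Hp : (0 < R - c i)%N by have := ltn_ord (c i); lia.
have := E i (Ordinal Hj) (pos_lt (ltn_ord i) Hp Hj).
rewrite !tmat_mk (negbTE Ha) (negbTE Hb) /=.
have -> : (R <= c i + (R - c i))%N by have := ltn_ord (c i); lia.
move=> /esym /idP H.
have := ltn_ord (c i); lia.
Qed.

Lemma c_eq s c s0 c0 : tmat_agree (mk s c) (mk s0 c0) -> c =1 c0.
Proof.
move=> E i; apply: ord_inj.
case: (eqVneq (nat_of_ord (c i)) 0) => Ha.
  by rewrite Ha (L1 E Ha).
case: (eqVneq (nat_of_ord (c0 i)) 0) => Hb.
  by move: Ha; rewrite (L1 (agree_sym E) Hb).
by apply/eqP; rewrite eqn_leq !(L2 E, L2 (agree_sym E)).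
Qed.

Lemma Psi_nth s0 c0 (i : 'I_n) : (i < n.-1)%N ->
  nth Lab (Psi R n (exc_word (mk s0 c0))) i =
  if nat_of_ord (c0 i) == 0 then Some (i < s0 i)%N else None.
Proof.
move=> Hi; rewrite /Psi (nth_map 0) ?size_iota // nth_iota // add0n.
have E : [seq nth false (exc_word (mk s0 c0)) ((R - 1 - j) * n + i) | j <- iota 0 R]
  = [seq (if nat_of_ord (c0 i) == 0 then (i < s0 i)%N else (R <= c0 i + j)%N) | j <- iota 0 R].
  apply/eq_in_map => j; rewrite mem_iota add0n => /andP[_ Hj].
  have := @exc_nth (mk s0 c0) i (Ordinal Hj); rewrite /= tmat_mk => -> //.
  case: j Hj => [|j] Hj; first exact: pos_lt0.
  exact: pos_lt.
rewrite E; case: eqP => Hc.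
  rewrite /letter_of /=; case: (i < s0 i)%N => /=.
    by rewrite (_ : all id _ = true) //; apply/allP => x /mapP [? _ ->].
  by rewrite (_ : all _ _ = true) //; apply/allP => x /mapP [? _ ->].
have Hr : (0 < r)%N by have := ltn_ord (c0 i); lia.
have A1 : all (fun t => ~~ t) [seq (R <= c0 i + j)%N | j <- iota 0 R] = false.
  apply/negbTE/allPn; exists true => //.
  apply/mapP; exists r; last by have := ltn_ord (c0 i); lia.
  by rewrite mem_iota; lia.
have A2 : all id [seq (R <= c0 i + j)%N | j <- iota 0 R] = false.
  by rewrite /= addn0 leqNgt ltn_ord.
by rewrite /letter_of A1 A2.
Qed.

Lemma part1 (pi0 : {perm sigma_t R n}) : inG pi0 ->
  cnt_G R n (exc_word pi0) = cnt_S n (Psi R n (exc_word pi0)).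
Proof.
move=> /G_char [s0 [c0 ->]].
pose okW (s : 'S_n) := [forall i : 'I_n,
  ((i < n.-1)%N && (nat_of_ord (c0 i) == 0)) ==> ((i < s i)%N == (i < s0 i)%N)].
have mk_inj : injective (fun s => mk s c0).
  move=> s s' E; apply/permP => i.
  by have := congr1 (fun p : {perm sigma_t R n} => (p (i, ord0)).1) E; rewrite /= !mkE.
have C2 : cnt_S n (Psi R n (exc_word (mk s0 c0))) = #|[set s | okW s]|.
  rewrite /cnt_S; apply: eq_card => s; rewrite !inE; apply: eq_forallb => i.
  case: (ltnP i n.-1) => Hi /=; last by [].
  by rewrite Psi_nth //; case: eqP.
rewrite C2 /cnt_G -(card_imset _ mk_inj); apply: eq_card => pi.
rewrite inE; apply/andP/imsetP.
  move=> [/G_char [s [c ->]] /eqP Ew].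
  have Ag : tmat_agree (mk s c) (mk s0 c0).
    by move=> i j Hp; rewrite -!exc_nth // Ew.
  have Ec := c_eq Ag.
  exists s.
    rewrite inE; apply/forallP => i; apply/implyP => /andP [Hi /eqP H0].
    have := Ag i ord0 (pos_lt0 Hi (ltn0Sn r)); rewrite !tmat_mk Ec H0 eqxx => ->.
    by [].
  by apply/permP => -[i j]; rewrite !mkE; congr pair; apply: ord_inj; rewrite /= Ec.
move=> [s]; rewrite inE => Hs ->; split; first exact: inG_mk.
apply/eqP; rewrite /exc_word; congr take; congr flatten.
apply: eq_map => j; apply: eq_map => i; rewrite !tmat_mk.
case: eqP => // H0; move/forallP: Hs => /(_ i); rewrite H0 eqxx andbT.
case: (ltnP i n.-1) => Hi /=; first by move/eqP.
have := ltn_ord (s i); have := ltn_ord (s0 i); lia.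
Qed.

End P1.


Definition okl (x : letter) (i v : nat) : bool :=
  match x with Some c => (i < v) == c | None => true end.

Definition okP n (W : seq letter) (s : 'S_n) : bool :=
  [forall i : 'I_n, okl (nth Lab W i) i (s i)].

Definition cntP n (W : seq letter) := #|[set s : 'S_n | okP W s]|.

Lemma card_fix_max n (W : seq letter) (Hs : size W = n) :
  #|[set u : 'S_n.+1 | okP W u && (u ord_max == ord_max)]| = cntP n W.
Proof.
rewrite /cntP -!sum1_card.
rewrite (reindex (lift_perm ord_max ord_max)); last first.
  pose ulsf i (s : 'S_n.+1) k := odflt k (unlift (s i) (s (lift i k))).
  have ulsfK i (s : 'S_n.+1) k: lift (s i) (ulsf i s k) = s (lift i k).
    rewrite /ulsf; have:= neq_lift i k.
    by rewrite -(can_eq (permK s)) => /unlift_some[] ? ? ->.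
  have inj_ulsf: injective (ulsf ord_max _).
    move=> s; apply: can_inj (ulsf (s ord_max) s^-1%g) _ => k'.
    by rewrite {1}/ulsf ulsfK !permK liftK.
  exists (fun s => perm (inj_ulsf s)) => [s _ | s].
    by apply/permP=> k'; rewrite permE /ulsf lift_perm_lift lift_perm_id liftK.
  rewrite inE => /andP[_ /eqP si0]; apply/permP=> k.
  case: (unliftP ord_max k) => [k'|] ->; rewrite ?lift_perm_id //.
  rewrite lift_perm_lift permE; have := ulsfK ord_max s k'; rewrite si0. done.

apply: eq_bigl => s; rewrite !inE lift_perm_id eqxx andbT.
apply/forallP/forallP => H i.
  by have := H (lift ord_max i); rewrite lift_perm_lift !lift_max.
case: (unliftP ord_max i) => [k|] ->.
  by rewrite lift_perm_lift !lift_max.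
by rewrite /= nth_default // Hs.
Qed.

Lemma count_sum (T : Type) (x0 : T) (a : pred T) (s : seq T) :
  count a s = \sum_(i < size s) a (nth x0 s i).
Proof.
elim: s => [|x s IH]; first by rewrite big_ord0.
by rewrite big_ord_recl /= IH.
Qed.

Lemma card_key n (W : seq letter) (Hs : size W = n)
  (Hnb : all (fun x => x != Lb) W) :
  cntP n.+1 W = (count (fun x => x == Lab) W).+1 * cntP n W.
Proof.
rewrite {1}/cntP -sum1_card.
rewrite (partition_big (fun s : 'S_n.+1 => (s^-1)%g ord_max) xpredT) //=.
have inner : forall j : 'I_n.+1,
  \sum_(s | (s \in [set s0 | okP W s0]) && ((s^-1)%g ord_max == j)) 1
  = (nth Lab W j == Lab) * cntP n W.
  move=> j; case: eqP => Hj.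
    rewrite mul1n -(card_fix_max Hs) -sum1_card.
    rewrite [RHS](reindex_inj (mulgI (tperm j ord_max))).
    apply: eq_bigl => s; rewrite !inE permM tpermR.
    rewrite (canF_eq (permKV s)) eq_sym; congr andb.
    apply/forallP/forallP => H i; have := H i; rewrite permM;
      case: tpermP => [->|->|]; rewrite ?Hj //= nth_default // Hs //.
  rewrite mul0n big1 // => s; rewrite inE (canF_eq (permKV s)) => /andP[/forallP H /eqP E].
  have := H j; rewrite -E.
  have Hjn : (j < n)%N.
    case: (ltnP j n) => // Hle; exfalso; apply: Hj; by rewrite nth_default // Hs.
  case Ej: (nth Lab W j) => [c|] //=.
  case: c Ej => Ej.
    have : nth Lab W j \in W by rewrite mem_nth // Hs.
    by move=> Hm; move/allP: Hnb => /(_ _ Hm); rewrite Ej.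
  by rewrite Hjn.
rewrite (eq_bigr _ (fun j _ => inner j)) -big_distrl /=; congr muln.
rewrite big_ord_recr /= nth_default ?Hs // eqxx addn1; congr S.
by rewrite (count_sum Lab) Hs.
Qed.

Fixpoint qprod (c : nat) (W : seq letter) : nat :=
  match W with [::] => c | x :: W' => c * qprod (c + (x == Lab)) W' end.

Lemma qprod_rcons c W x :
  qprod c (rcons W x) = qprod c W * (c + count (fun y => y == Lab) (rcons W x)).
Proof.
elim: W c => [|y W IH] c /=; first by rewrite addn0.
by rewrite IH mulnA addnA.
Qed.

Lemma cntP_rcons m W x : size W = m -> x != Lb ->
  cntP m.+1 (rcons W x) = cntP m.+1 W.
Proof.
move=> Hs Hx; rewrite /cntP; apply: eq_card => s; rewrite !inE.
apply: eq_forallb => i; rewrite nth_rcons Hs.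
case: ltngtP => // Hi.
  have := ltn_ord i; rewrite ltnS leqNgt Hi //.
have Hv : (s i < m.+1)%N by [].
rewrite (nth_default _ (_ : size W <= i)%N) ?Hs ?Hi //.
case: x Hx => [[]|] //= _.
by rewrite ltnNge -ltnS Hv.
Qed.

Lemma cnt_prod W : all (fun x => x != Lb) W -> cntP (size W).+1 W = qprod 1 W.
Proof.
elim/last_ind: W => [|W x IH] Hall.
  rewrite /cntP /= (_ : [set s : 'S_1 | okP [::] s] = setT) ?cardsT ?card_Sn //.
  by apply/setP => s; rewrite !inE; apply/forallP => i; rewrite nth_nil.
move: Hall; rewrite all_rcons => /andP[Hx Hall].
rewrite size_rcons card_key ?size_rcons ?all_rcons ?Hx ?Hall //.
by rewrite cntP_rcons // IH // qprod_rcons mulnC add1n.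
Qed.

Lemma nth_mid (U V : seq letter) x y i : i != size U ->
  nth Lab (U ++ x :: V) i = nth Lab (U ++ y :: V) i.
Proof.
move=> Hi; rewrite !nth_cat; case: ltnP => // Hle.
by case E: (i - size U) => [|k] //; move: Hi Hle E; lia.
Qed.

Lemma okP_mid n (U V : seq letter) x (p : 'I_n) (s : 'S_n) : nat_of_ord p = size U ->
  okP (U ++ x :: V) s = okl x p (s p) &&
     [forall i : 'I_n, (i != p) ==> okl (nth Lab (U ++ Lab :: V) i) i (s i)].
Proof.
move=> Hp; apply/forallP/andP.
  move=> H; split.
    by have := H p; rewrite nth_cat Hp ltnn subnn.
  apply/forallP => i; apply/implyP => Hi; have := H i.
  by rewrite (@nth_mid U V x Lab i) // -Hp.
move=> [H1 /forallP H2] i; case: (eqVneq i p) => [->|Hi].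
  by move: H1; rewrite nth_cat Hp ltnn subnn.
by have := implyP (H2 i) Hi; rewrite (@nth_mid U V Lab x i) // -Hp.
Qed.

Lemma cntP_split n (U V : seq letter) : (size U < n)%N ->
  cntP n (U ++ Lab :: V) = cntP n (U ++ Lb :: V) + cntP n (U ++ La :: V).
Proof.
move=> Hlt; pose p : 'I_n := Ordinal Hlt.
rewrite /cntP.
have E : [set s : 'S_n | okP (U ++ Lab :: V) s] =
  [set s | okP (U ++ Lb :: V) s] :|: [set s | okP (U ++ La :: V) s].
  apply/setP => s; rewrite !inE !(okP_mid V _ s (erefl : nat_of_ord p = size U)) /=.
  by case: (size U < s p)%N; rewrite ?orbF.
have E2 : [set s : 'S_n | okP (U ++ Lb :: V) s] :&: [set s | okP (U ++ La :: V) s] = set0.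
  apply/setP => s; rewrite !inE !(okP_mid V _ s (erefl : nat_of_ord p = size U)) /=.
  by case: (size U < s p)%N; rewrite ?andbF.
by rewrite E cardsU E2 cards0 subn0.
Qed.

Fixpoint bseqs k : seq (seq bool) :=
  if k is k'.+1 then map (cons true) (bseqs k') ++ map (cons false) (bseqs k')
  else [:: [::]].
Definition res (b : bool) : letter := if b then Lab else La.
Fixpoint valid (xs : seq letter) (d : seq bool) : bool :=
  match xs, d with
  | x :: xs', b :: d' => ((x == Lab) ==> b) && valid xs' d'
  | [::], [::] => true
  | _, _ => false
  end.
Definition sgn (d : seq bool) : int := ((-1) ^+ count negb d)%R.

Lemma assemble_cons m ns x xs :
  assemble (m :: ns) (x :: xs) = nseq m La ++ x :: assemble ns xs.
Proof. by []. Qed.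

Lemma IE n ns xs U : size ns = (size xs).+1 -> all (fun x => x != La) xs ->
  (size (U ++ assemble ns xs) <= n)%N ->
  (cntP n (U ++ assemble ns xs) : int) =
  (\sum_(d <- bseqs (size xs) | valid xs d)
     sgn d * (cntP n (U ++ assemble ns (map res d)) : int))%R.
Proof.
elim: xs ns U => [|x xs IH] [|m ns] U //=.
  case: ns => // _ _ _.
  by rewrite big_cons big_nil /= mul1r addr0.
move=> [Hs] /andP[Hx Hall] Hsz.
rewrite big_cat !big_map /=.
have IH' : forall y, (cntP n (U ++ nseq m La ++ y :: assemble ns xs) : int) =
   (\sum_(d <- bseqs (size xs) | valid xs d)
     sgn d * (cntP n (U ++ nseq m La ++ y :: assemble ns (map res d)) : int))%R.
  move=> y; have := IH ns (rcons (U ++ nseq m La) y) Hs Hall.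
  rewrite cat_rcons -catA => ->.
    by apply: eq_bigr => d _; rewrite cat_rcons -catA.
  by move: Hsz; rewrite !size_cat /=.
have sT : forall j, sgn (true :: j) = sgn j by [].
have sF : forall j, sgn (false :: j) = (- sgn j)%R.
  by move=> j; rewrite /sgn /= exprS mulN1r.
case: x Hx Hsz => [[]|] // _ Hsz /=.
-
  have Hlt : (size (U ++ nseq m La) < n)%N.
    by move: Hsz; rewrite !size_cat /=; lia.
  have := cntP_split (assemble ns xs) Hlt.
  rewrite -!catA /= => E.
  have -> : (cntP n (U ++ nseq m La ++ Lb :: assemble ns xs) : int) =
     ((cntP n (U ++ nseq m La ++ Lab :: assemble ns xs) : int) -
     (cntP n (U ++ nseq m La ++ La :: assemble ns xs) : int))%R.
    by rewrite E PoszD addrK.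
  rewrite !IH'; congr (_ + _)%R.
  by rewrite -sumrN; apply: eq_big => // j _; rewrite sF mulNr.
-
  rewrite [X in (_ + X)%R]big_pred0 // addr0 IH'.
  by apply: eq_big => // j _; rewrite sT.
Qed.

Lemma qprod_nseq c m W : qprod c (nseq m La ++ W) = c ^ m * qprod c W.
Proof. by elim: m => [|m IH] /=; rewrite ?mul1n // addn0 IH expnS mulnA. Qed.

Lemma qprod_assemble d c k ns : size d = k -> size ns = k.+1 ->
  qprod c (assemble ns (map res d)) =
  \prod_(i < k.+1) (c + count id (take i d)) ^ (nth 0 ns i).+1.
Proof.
elim: d c k ns => [|b d IH] c [|k] [|m ns] //=.
  case: ns => // _ _; rewrite big_ord1 /=.
  by have := qprod_nseq c m [::]; rewrite cats0 => ->; rewrite /= addn0 expnSr.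
move=> [Hd] [Hns].
rewrite qprod_nseq /= (IH _ k) // [RHS]big_ord_recl /= addn0 expnSr -mulnA; congr muln.
congr muln; apply: eq_bigr => i _ /=.
by rewrite /bump /= addnA add0n; case: b.
Qed.

Lemma PoszX (a b : nat) : Posz (a ^ b) = ((Posz a) ^+ b)%R.
Proof. by elim: b => [|b IH]; rewrite ?expnS ?exprS ?PoszM ?IH. Qed.

Lemma PoszP (I : Type) (r : seq I) (P : pred I) (F : I -> nat) :
  Posz (\prod_(i <- r | P i) F i) = (\prod_(i <- r | P i) Posz (F i))%R.
Proof. exact: (big_morph Posz PoszM (erefl (Posz 1))). Qed.

Lemma mem_cons_map (b b' : bool) d (B : seq (seq bool)) :
  (b' :: d \in map (cons b) B) = (b' == b) && (d \in B).
Proof.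
apply/mapP/andP => [[e He [-> ->]]|[/eqP -> Hd]]; first by rewrite eqxx.
by exists d.
Qed.

Lemma bseqs_mem k d : (d \in bseqs k) = (size d == k).
Proof.
elim: k d => [|k IH] [|b d] //=.
- by rewrite mem_cat; apply/negbTE; rewrite negb_or; apply/andP; split; apply/mapP => -[].
- by rewrite mem_cat !mem_cons_map IH eqSS; case: b; rewrite /= ?orbF.
Qed.

Lemma bseqs_uniq k : uniq (bseqs k).
Proof.
elim: k => [|k IH] //=; rewrite cat_uniq !map_inj_uniq //; last first.
  by move=> ?? [].
  by move=> ?? [].
rewrite IH /= andbT; apply/hasPn => d /mapP [e He ->].
by rewrite mem_cons_map.
Qed.

Lemma valid_nthP xs d : valid xs d =
  (size xs == size d) &&
  [forall i : 'I_(size d), (nth La xs i == Lab) ==> nth false d i].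
Proof.
elim: xs d => [|x xs IH] [|b d] //=.
  by apply/esym/forallP => -[].
rewrite IH eqSS; apply/andP/andP => [[H1 /andP[H2 /forallP H3]]|[H2 /forallP H3]].
  split => //; apply/forallP => i; case: (unliftP ord0 i) => [j|] -> //=.
  exact: H3.
split; first exact: (H3 ord0).
apply/andP; split => //; apply/forallP => i; exact: (H3 (lift ord0 i)).
Qed.

Definition hmap k (d : seq bool) : {ffun 'I_k.+1 -> 'I_k.+2} :=
  [ffun i : 'I_k.+1 => inord (1 + count id (take i d))].

Definition hinv k (rr : {ffun 'I_k.+1 -> 'I_k.+2}) : seq bool :=
  [seq rr_at rr i.+1 == (rr_at rr i).+1 | i <- iota 0 k].

Lemma rrat_h k d i : size d = k -> (i <= k)%N ->
  rr_at (hmap k d) i = 1 + count id (take i d).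
Proof.
move=> Hd Hi; rewrite /rr_at ffunE inordK // inordK //.
rewrite ltnS add1n ltnS (leq_trans (count_size _ _)) // size_take.
case: ltnP => //; rewrite Hd => H; lia.
Qed.

Lemma count_take_S d i : (i < size d)%N ->
  count id (take i.+1 d) = count id (take i d) + nth false d i.
Proof. by move=> Hi; rewrite (take_nth false Hi) -cats1 count_cat /= addn0. Qed.

Lemma hinv_h k d : size d = k -> hinv (hmap k d) = d.
Proof.
move=> Hd; apply: (@eq_from_nth _ false); first by rewrite size_map size_iota.
move=> i; rewrite size_map size_iota => Hi.
rewrite (nth_map 0) ?size_iota // nth_iota // add0n.
rewrite !rrat_h // ?(ltnW Hi) // count_take_S ?Hd //.
case: (nth false d i); rewrite ?addn0 ?addn1 ?eqxx //.
by apply/negbTE; rewrite neq_ltn ltnSn.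
Qed.

Lemma in_Rk_h xs d : valid xs d -> in_Rk xs (hmap (size xs) d).
Proof.
rewrite valid_nthP => /andP[/eqP Hs /forallP H].
have Hd : size d = size xs by rewrite Hs.
apply/andP; split; first by rewrite (rrat_h Hd) // take0.
apply/forallP => i.
rewrite !(rrat_h Hd) // ?(ltnW (ltn_ord i)) // count_take_S ?Hd ?ltn_ord //.
have := H (cast_ord Hs i) => /=.
case: (nth false d i); rewrite ?addn0 ?addn1 ?eqxx ?orbT //=.
by rewrite implybF => /negbTE ->.
Qed.

Lemma rrat_hinv xs (rr : {ffun 'I_(size xs).+1 -> 'I_(size xs).+2}) :
  in_Rk xs rr -> forall j, (j <= size xs)%N ->
  rr_at rr j = 1 + count id (take j (hinv rr)).
Proof.
move=> /andP[/eqP H0 /forallP H]; elim => [|j IH] Hj; first by rewrite take0.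
have Hjk : (j < size xs)%N by [].
rewrite count_take_S ?size_map ?size_iota //.
rewrite (nth_map 0) ?size_iota // nth_iota // add0n addnA -IH; last exact: ltnW.
have := H (Ordinal Hjk) => /andP[+ _] /=.
move: (rr_at rr j.+1) (rr_at rr j) => a b /orP[/eqP ->|/eqP ->].
  by rewrite eqn_leq ltnn /= andbF addn0.
by rewrite eqxx addn1.
Qed.

Lemma h_hinv xs (rr : {ffun 'I_(size xs).+1 -> 'I_(size xs).+2}) :
  in_Rk xs rr -> hmap (size xs) (hinv rr) = rr.
Proof.
move=> HR; apply/ffunP => i; apply: ord_inj.
have Hsz : size (hinv rr) = size xs by rewrite size_map size_iota.
have E1 : forall f : {ffun 'I_(size xs).+1 -> 'I_(size xs).+2},
  nat_of_ord (f i) = rr_at f i by move=> f; rewrite /rr_at inord_val.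
by rewrite !E1 (rrat_h Hsz (ltn_ord i)) (rrat_hinv HR (ltn_ord i)).
Qed.

Lemma valid_hinv xs (rr : {ffun 'I_(size xs).+1 -> 'I_(size xs).+2}) :
  in_Rk xs rr -> valid xs (hinv rr).
Proof.
move=> HR; rewrite valid_nthP size_map size_iota eqxx /=.
apply/forallP => i; have /andP[_ /forallP H] := HR.
have := H i.
rewrite (nth_map 0) ?size_iota // nth_iota // add0n.
by case/andP.
Qed.

Lemma sum_Rk xs (F : {ffun 'I_(size xs).+1 -> 'I_(size xs).+2} -> int) :
  (\sum_(rr | in_Rk xs rr) F rr =
   \sum_(d <- bseqs (size xs) | valid xs d) F (hmap (size xs) d))%R.
Proof.
rewrite -big_filter -[RHS]big_filter.
rewrite -(big_map (hmap (size xs)) xpredT).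
apply: perm_big; apply: uniq_perm.
- exact: (filter_uniq _ (index_enum_uniq _)).
- rewrite map_inj_in_uniq ?(filter_uniq _ (bseqs_uniq _)) //.
  apply: (@can_in_inj _ _ _ _ (@hinv (size xs))) => d.
  rewrite mem_filter bseqs_mem => /andP[_ /eqP Hd]; exact: hinv_h.
move=> rr; rewrite mem_filter mem_index_enum andbT.
apply/idP/mapP => [HR|[d]].
  exists (hinv rr); last by rewrite h_hinv.
  by rewrite mem_filter (valid_hinv HR) bseqs_mem size_map size_iota eqxx.
by rewrite mem_filter => /andP[Hv _] ->; apply: in_Rk_h.
Qed.

Lemma card_set_sum k (P : pred 'I_k) : #|[set i | P i]| = \sum_(i < k) P i.
Proof.
rewrite -sum1_card big_mkcond /=; apply: eq_bigr => i _.
by rewrite inE; case: (P i).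
Qed.

Lemma hof_h (xs : seq letter) (d : seq bool) : size d = size xs -> h_of (hmap (size xs) d) = count negb d.
Proof.
move=> Hd; rewrite /h_of card_set_sum (count_sum false) Hd.
apply: eq_bigr => i _.
rewrite !(rrat_h Hd) ?(ltnW (ltn_ord i)) // count_take_S ?Hd //.
by case: (nth false d i); rewrite /= ?addn0 ?addn1 ?eqxx //= eqn_leq ltnn.
Qed.

Lemma term_h (xs : seq letter) (ns : seq nat) (d : seq bool) : size d = size xs -> size ns = (size xs).+1 ->
  ((-1) ^+ h_of (hmap (size xs) d) *
   \prod_(i < (size xs).+1)
     ((rr_at (hmap (size xs) d) i)%:Z ^+ (nth 0%N ns i).+1))%R =
  (sgn d * (qprod 1 (assemble ns (map res d)) : int))%R.
Proof.
move=> Hd Hns; rewrite hof_h // /sgn; congr (_ * _)%R.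
rewrite (qprod_assemble _ Hd) // PoszP; apply: eq_bigr => i _.
by rewrite (rrat_h Hd (ltn_ord i)) PoszX.
Qed.

Lemma cntS_cntP n W : size W = n.-1 -> cnt_S n W = cntP n W.
Proof.
move=> Hs; rewrite /cnt_S /cntP; apply: eq_card => s; rewrite !inE.
apply: eq_forallb => i; case: ltnP => Hi //=.
by rewrite nth_default // Hs.
Qed.

Lemma size_assemble ns (ys zs : seq letter) : size ys = size zs ->
  size (assemble ns ys) = size (assemble ns zs).
Proof.
elim: ns ys zs => [|m ns IH] [|y ys] [|z zs] //= [E].
by rewrite !size_cat /= (IH _ _ E).
Qed.

Lemma all_assemble ns d :
  all (fun x => x != Lb) (assemble ns (map res d)).
Proof.
elim: ns d => [|m ns IH] [|b d] //=.
  by apply/allP => x /nseqP [->].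
rewrite all_cat; apply/andP; split; first by apply/allP => x /nseqP [->].
by rewrite /= IH andbT; case: b.
Qed.

Lemma part2 n ns xs : (0 < n)%N -> size ns = (size xs).+1 ->
  all (fun x => x != La) xs -> size (assemble ns xs) = n.-1 ->
  Posz (cnt_S n (assemble ns xs)) = rhs_sum ns xs.
Proof.
move=> Hn Hns Hall Hsz.
rewrite cntS_cntP // -(cat0s (assemble ns xs)) (@IE n ns xs [::] Hns Hall); last by rewrite Hsz; lia.
rewrite /rhs_sum /= sum_Rk big_seq_cond [RHS]big_seq_cond; apply: eq_bigr => d /andP[_ Hv].
have Hds : size d = size xs by move: Hv; rewrite valid_nthP => /andP[/eqP -> _].
rewrite term_h //; congr (_ * Posz _)%R.
have Hs2 : size (assemble ns (map res d)) = n.-1.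
  by rewrite -Hsz; apply: size_assemble; rewrite size_map.
by rewrite /= -(prednK Hn) -Hs2 cnt_prod // all_assemble.
Qed.

End Aux.
Import Aux.

Theorem mainTheorem3 (r n : nat) (pi0 : {perm sigma_t r n})
    (ns : seq nat) (xs : seq letter) :
  (0 < r)%N -> (0 < n)%N -> inG pi0 ->
  size ns = (size xs).+1 ->
  all (fun x => x != La) xs ->
  Psi r n (exc_word pi0) = assemble ns xs ->
  (cnt_G r n (exc_word pi0) = cnt_S n (Psi r n (exc_word pi0))) /\
  (Posz (cnt_S n (Psi r n (exc_word pi0))) = rhs_sum ns xs).
Proof.
case: r pi0 => [|r] pi0 // _ Hn HG Hns Hall HP.
split; first exact: part1.
rewrite HP; apply: part2 => //; rewrite -HP /Psi size_map size_iota //.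
Qed.
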